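(* Let $H_m,H_{el}$ be finite groups with an action $(h,g)\mapsto h\cdot g$ of $H_{el}$ on $H_m$ satisfying $h\cdot(gg')=(h\cdot g)(h\cdot g')$, and let $\mathcal{A}=F(H_m)\times\mathbb{C}H_{el}$ be the modified quantum double, with elements written as functions in $F(H_m\times H_{el})$. Let $\alpha$ be an irreducible representation of $H_{el}$ on $V_\alpha$, let $\Pi^e_\alpha$ be the corresponding electric irreducible representation of $\mathcal{A}$ (orbit $\{e\}$, $g_A=e$, $N_A=H_{el}$), and let $|\phi_r\rangle$ be a vector in its carrier space. Let $N_{\phi_r}=\{h\in H_{el}:\Pi^e_\alpha(h)|\phi_r\rangle=|\phi_r\rangle\}$, where $h$ denotes $\sum_{g\in H_m}P_gh\in\mathcal{A}$. Then $\mathcal{T}_r:=\{a\in\mathcal{A}:(\mathrm{id}\otimes\Pi^e_\alpha)\Delta(a)(1\otimes|\phi_r\rangle)=a\otimes|\phi_r\rangle\}$ equals $F(H_m)\otimes\mathbb{C}N_{\phi_r}$, i.e. $f\in\mathcal{T}_r$ if and only if $f(x_1,y_1)=0$ for all $x_1\in H_m$ and all $y_1\notin N_{\phi_r}$.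
   Context: Modified quantum double: vector space $F(H_m)\otimes\mathbb{C}H_{el}$ with basis $P_gh$, identified with $F(H_m\times H_{el})$ via $P_gh\leftrightarrow\delta_g\otimes\delta_h$; $P_ghP_{g'}h'=\delta_{g,h\cdot g'}P_ghh'$, $\Delta(P_gh)=\sum_{g'\in H_m}P_{g'}h\otimes P_{g'^{-1}g}h$, $\varepsilon(P_gh)=\delta_{g,e}$, $S(P_gh)=P_{h^{-1}\cdot g^{-1}}h^{-1}$. The carrier space of $\Pi^e_\alpha$ is $\{|\phi\rangle:H_{el}\to V_\alpha\mid |\phi(xn)\rangle=\alpha(n^{-1})|\phi(x)\rangle\ \forall n\in H_{el}\}$, with action $(\Pi^e_\alpha(f)\phi)(x)=\sum_{z\in H_{el}}f(e,z)|\phi(z^{-1}x)\rangle$. *)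

(* Defs.v *)
From HB Require Import structures.
From mathcomp Require Import all_boot all_order all_algebra all_fingroup.
From mathcomp Require Import all_field all_character.
Set Implicit Arguments. Unset Strict Implicit. Unset Printing Implicit Defensive.
Import GRing.Theory Num.Theory.
Local Open Scope ring_scope.

(* Modified quantum double A = F(Hm) (x) C Hel, identified with
   F(Hm x Hel): an element f is its coordinate function, f = sum f(g,h) P_g h. *)
Notation QD Hm Hel := {ffun (Hm : finGroupType) * (Hel : finGroupType) -> algC}.
(* A (x) A identified with F((Hm x Hel) x (Hm x Hel)) (coordinates in the
   basis P_g h (x) P_g' h'). *)
Notation QD2 Hm Hel :=
  {ffun ((Hm : finGroupType) * (Hel : finGroupType)) * (Hm * Hel) -> algC}.

Section QuantumDouble.
Variables (Hm Hel : finGroupType).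

Definition Pb (g : Hm) (h : Hel) : QD Hm Hel :=
  [ffun b => ((b == (g, h)) : nat)%:R].

Definition elem (h : Hel) : QD Hm Hel := \sum_(g : Hm) Pb g h.

Definition tens (a b : QD Hm Hel) : QD2 Hm Hel :=
  [ffun p => a p.1 * b p.2].

Definition Delta_basis (g : Hm) (h : Hel) : QD2 Hm Hel :=
  \sum_(g' : Hm) tens (Pb g' h) (Pb (g'^-1 * g)%g h).

Definition Delta (f : QD Hm Hel) : QD2 Hm Hel :=
  [ffun p => \sum_(b : Hm * Hel) f b * Delta_basis b.1 b.2 p].

Variable n : nat.
Variable rG : mx_representation algC [set: Hel] n.

(* the representation alpha of Hel on V_alpha = 'rV_n, as a left action:
   alpha(g) v := v *m rG (g^-1)  (rG is mathcomp's right-action convention) *)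
Definition alpha (g : Hel) (v : 'rV[algC]_n) : 'rV[algC]_n := v *m rG (g^-1)%g.

Definition in_carrier (phi : {ffun Hel -> 'rV[algC]_n}) : Prop :=
  forall x m : Hel, phi (x * m)%g = alpha (m^-1)%g (phi x).

Definition PiE (f : QD Hm Hel) (phi : {ffun Hel -> 'rV[algC]_n})
  : {ffun Hel -> 'rV[algC]_n} :=
  [ffun x => \sum_(z : Hel) f (1%g, z) *: phi (z^-1 * x)%g].

(* A (x) Carrier identified with coordinate functions Hm x Hel -> Carrier.
   (id (x) Pi)(T)(1 (x) phi) for T in A (x) A: *)
Definition idPi (T : QD2 Hm Hel) (phi : {ffun Hel -> 'rV[algC]_n})
  : {ffun Hm * Hel -> {ffun Hel -> 'rV[algC]_n}} :=
  [ffun b => PiE [ffun b' => T (b, b')] phi].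

Definition tensV (a : QD Hm Hel) (phi : {ffun Hel -> 'rV[algC]_n})
  : {ffun Hm * Hel -> {ffun Hel -> 'rV[algC]_n}} :=
  [ffun b => [ffun x => a b *: phi x]].

Definition Nphi (phi : {ffun Hel -> 'rV[algC]_n}) : {set Hel} :=
  [set h | PiE (elem h) phi == phi].

Definition in_Tr (phi : {ffun Hel -> 'rV[algC]_n}) (a : QD Hm Hel) : Prop :=
  idPi (Delta a) phi = tensV a phi.

End QuantumDouble.

(* Main.v *)
Require Import Defs.
From HB Require Import structures.
From mathcomp Require Import all_boot all_order all_algebra all_fingroup.
From mathcomp Require Import all_field all_character.
Import GRing.Theory Num.Theory.
Local Open Scope ring_scope.

Lemma Delta_basisE (Hm Hel : finGroupType) (g : Hm) (h : Hel) p :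
  Delta_basis g h p = (((p.1.2 == h) && (p.2.2 == h)) && (g == p.1.1 * p.2.1)%g)%:R.
Proof.
rewrite /Delta_basis sum_ffunE (bigD1 p.1.1) //= big1 ?addr0.
  rewrite /tens /Pb !ffunE; case: p => [[a b] [c d]] /=.
  rewrite !xpair_eqE eqxx /=.
  case: (b == h); case: (d == h); rewrite ?mul0r ?mulr0 ?andbF ?mul1r ?andbT //.
  case: eqP => [->|ne]; first by rewrite mulKVg eqxx.
  by case: eqP => // E; case: ne; rewrite E mulKg.
move=> i /negbTE ni; rewrite /tens /Pb !ffunE.
case: p ni => [[a b] [c d]] /= ni; by rewrite xpair_eqE eq_sym ni mul0r.
Qed.

Lemma DeltaE (Hm Hel : finGroupType) (f : QD Hm Hel) g1 h1 g2 h2 :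
  Delta f ((g1, h1), (g2, h2)) = (h2 == h1)%:R * f (g1 * g2, h1)%g.
Proof.
rewrite /Delta ffunE (bigD1 (g1 * g2, h1)%g) //= big1 ?addr0.
  by rewrite Delta_basisE /= !eqxx andbT mulrC.
move=> [a b] /= ne; rewrite Delta_basisE /=.
case: (h1 == b) / eqP => [Eb|]; last by rewrite mulr0.
case: (h2 == b) / eqP => [_|]; last by rewrite mulr0.
case: (a == g1 * g2)%g / eqP => [Ea|]; last by rewrite mulr0.
by move: ne; rewrite Ea Eb eqxx.
Qed.

Theorem mainTheorem6 (Hm Hel : finGroupType) (act : Hel -> Hm -> Hm)
  (act1 : forall g : Hm, act 1%g g = g)
  (actM : forall (h h' : Hel) (g : Hm), act (h * h')%g g = act h (act h' g))
  (act_morph : forall (h : Hel) (g g' : Hm),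
      act h (g * g')%g = (act h g * act h g')%g)
  (n : nat) (rG : mx_representation algC [set: Hel] n)
  (rG_irr : mx_irreducible rG)
  (phi : {ffun Hel -> 'rV[algC]_n}) (phi_car : in_carrier rG phi)
  (f : QD Hm Hel) :
  in_Tr phi f <->
  (forall (x1 : Hm) (y1 : Hel), y1 \notin @Nphi Hm Hel n phi -> f (x1, y1) = 0).
Proof.
have idPiE : forall g1 h1 x, idPi (Delta f) phi (g1, h1) x = f (g1, h1) *: phi (h1^-1 * x)%g.
  move=> g1 h1 x; rewrite /idPi !ffunE (bigD1 h1) //= big1 ?addr0.
    by rewrite ffunE DeltaE eqxx mul1r mulg1.
  by move=> z nz; rewrite ffunE DeltaE (negbTE nz) mul0r scale0r.
have elemE : forall (h z : Hel) (g : Hm), elem Hm h (g, z) = (z == h)%:R.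
  move=> h z g; rewrite /elem sum_ffunE (bigD1 g) //= big1 ?addr0.
    by rewrite /Pb ffunE xpair_eqE eqxx.
  by move=> g' ng; rewrite /Pb ffunE xpair_eqE eq_sym (negbTE ng).
have PiEh : forall h x, PiE (elem Hm h) phi x = phi (h^-1 * x)%g.
  move=> h x; rewrite ffunE (bigD1 h) //= big1 ?addr0.
    by rewrite elemE eqxx scale1r.
  by move=> z nz; rewrite elemE (negbTE nz) scale0r.
have NE : forall h, (h \in @Nphi Hm Hel n phi) = [forall x, phi (h^-1 * x)%g == phi x].
  move=> h; rewrite inE; apply/eqP/forallP => [E x|E].
    by rewrite -PiEh E.
  by apply/ffunP => x; rewrite PiEh; apply/eqP.
split.
  rewrite /in_Tr => T x1 y1 ny; apply/eqP/negPn/negP => nz; move/negP: ny; apply.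
  rewrite NE; apply/forallP => x; apply/eqP.
  move/ffunP: T => /(_ (x1, y1)) /ffunP /(_ x).
  rewrite idPiE /tensV !ffunE => /(congr1 (fun v => (f (x1, y1))^-1 *: v)).
  by rewrite !scalerA mulVf // !scale1r.
move=> H; apply/ffunP => [[g1 h1]]; apply/ffunP => x.
rewrite idPiE /tensV !ffunE.
case: (boolP (h1 \in @Nphi Hm Hel n phi)) => [|/H ->]; last by rewrite !scale0r.
by rewrite NE => /forallP /(_ x) /eqP ->.
Qed.
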